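(* For $l>0$ let $KP_{3,4}^3(l)$ be the hyperbolic tetrakis truncated octahedron: take a hyperbolic truncated octahedron with all faces regular (squares and hexagons) and edge length $l$, and attach to each of its square faces a pyramid obtained by subdividing a regular hyperbolic cube of edge length $l$ into six pyramids with apex at the center of the cube and bases the faces of the cube. Let $\alpha$ be the dihedral angle between two hexagonal faces of the truncated octahedron, $\beta$ the dihedral angle between a square and a hexagonal face of the truncated octahedron, and $\gamma$ the dihedral angle between the base and a side of the attached pyramid. Then there exists a value of $l$ such that \[\alpha+2\beta+2\gamma=2\pi.\]
   Context: The pyramids attached have dihedral angle $2\pi/3$ between adjacent triangular sides, since three cubes meet around each edge of the subdivision. *)

(* Defs.v *)
From Stdlib Require Import Reals Ratan.
Open Scope R_scope.

(** * Hyperboloid model of hyperbolic 3-space H^3 in Minkowski space R^{3,1} *)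

Record vec4 := V4 { c0 : R; c1 : R; c2 : R; c3 : R }.

Definition mink (u v : vec4) : R :=
  - c0 u * c0 v + c1 u * c1 v + c2 u * c2 v + c3 u * c3 v.

Definition vadd (u v : vec4) : vec4 :=
  V4 (c0 u + c0 v) (c1 u + c1 v) (c2 u + c2 v) (c3 u + c3 v).
Definition vscale (k : R) (u : vec4) : vec4 :=
  V4 (k * c0 u) (k * c1 u) (k * c2 u) (k * c3 u).

(** Points of H^3 given in Beltrami–Klein coordinates (x,y,z), x^2+y^2+z^2<1,
    sent to the hyperboloid  {X : <X,X> = -1, X_0 > 0}. *)
Definition in_ball (x y z : R) : Prop := x * x + y * y + z * z < 1.

Definition klein (x y z : R) : vec4 :=
  let s := sqrt (1 - (x * x + y * y + z * z)) in
  V4 (1 / s) (x / s) (y / s) (z / s).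

Definition arcosh (t : R) : R := ln (t + sqrt (t * t - 1)).
Definition hdist (P Q : vec4) : R := arcosh (- mink P Q).

(** Orthogonal projection of X onto the tangent space T_P H^3 = P^perp
    (valid for <P,P> = -1). *)
Definition tproj (P X : vec4) : vec4 := vadd X (vscale (mink X P) P).

(** Dihedral angle, along the geodesic line through A and B, between the
    half-plane bounded by that line containing C and the half-plane bounded
    by that line containing D.  It is the angle, measured in T_A H^3, between
    the tangent vectors at A pointing into the two half-planes orthogonally
    to the edge AB. *)
Definition dihedral (A B C D : vec4) : R :=
  let u := tproj A B in
  let w (X : vec4) :=
    let v := tproj A X in vadd v (vscale (- (mink v u / mink u u)) u) in
  acos (mink (w C) (w D) / sqrt (mink (w C) (w C) * mink (w D) (w D))).

(** Vertices: all permutations of (0, +-a, +-b), 0 < a < b, a^2+b^2 < 1.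
    Square faces lie in the planes  x,y,z = +-b; hexagonal faces in the planes
    +-x +-y +-z = a+b.  There are two orbits of edges under the octahedral
    symmetry: square–hexagon edges, e.g. (0,a,b)-(a,0,b), and
    hexagon–hexagon edges, e.g. (0,a,b)-(0,b,a).  All faces are regular with
    edge length l iff both edge types have hyperbolic length l (angles are
    equal by symmetry). *)
Definition trunc_oct_regular (a b l : R) : Prop :=
  0 < a /\ a < b /\ in_ball 0 a b /\
  hdist (klein 0 a b) (klein a 0 b) = l /\
  hdist (klein 0 a b) (klein 0 b a) = l.

(** alpha: dihedral angle between the two hexagons (in x+y+z=a+b and
    -x+y+z=a+b) meeting along the edge (0,a,b)-(0,b,a). *)
Definition TO_alpha (a b : R) : R :=
  dihedral (klein 0 a b) (klein 0 b a) (klein a 0 b) (klein (-a) 0 b).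

(** beta: dihedral angle between the square (in z=b) and the hexagon
    (in x+y+z=a+b) meeting along the edge (0,a,b)-(a,0,b). *)
Definition TO_beta (a b : R) : R :=
  dihedral (klein 0 a b) (klein a 0 b) (klein 0 (-a) b) (klein 0 b a).

Definition cube_regular (c l : R) : Prop :=
  0 < c /\ in_ball c c c /\
  hdist (klein c c c) (klein c (-c) c) = l.

(** gamma: dihedral angle of the pyramid with apex the cube centre (origin)
    and base the face z=c, between the base and the side face spanned by the
    centre and the edge (c,c,c)-(c,-c,c). *)
Definition cube_pyr_gamma (c : R) : R :=
  dihedral (klein c c c) (klein c (-c) c) (klein (-c) c c) (klein 0 0 0).

(* Main.v *)
Require Import Defs.
From Stdlib Require Import Reals Lra.
Open Scope R_scope.

Definition hom (x y z : R) : vec4 := V4 1 x y z.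
Definition tproj' (P X : vec4) : vec4 := vadd X (vscale (- (mink X P / mink P P)) P).
Definition wv (A B X : vec4) : vec4 :=
  vadd (tproj' A X) (vscale (- (mink (tproj' A X) (tproj' A B) / mink (tproj' A B) (tproj' A B))) (tproj' A B)).
Definition ratio (w1 w2 : vec4) : R := mink w1 w2 / sqrt (mink w1 w1 * mink w2 w2).

Lemma mink_sl k X Y : mink (vscale k X) Y = k * mink X Y.
Proof. destruct X, Y; unfold mink, vscale; simpl; ring. Qed.
Lemma mink_sr k X Y : mink X (vscale k Y) = k * mink X Y.
Proof. destruct X, Y; unfold mink, vscale; simpl; ring. Qed.

Lemma tproj_sA k A X : k * k * mink A A = -1 -> tproj (vscale k A) X = tproj' A X.
Proof.
  intros H. unfold tproj, tproj'. rewrite mink_sr.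
  assert (Hk : k <> 0) by (intro; subst; lra).
  assert (HA : mink A A = -1 / (k*k)) by (rewrite <- H; field; auto).
  rewrite HA. destruct A, X; unfold vadd, vscale; simpl. f_equal; field; auto.
Qed.

Lemma tproj'_s k A X : tproj' A (vscale k X) = vscale k (tproj' A X).
Proof.
  unfold tproj'. rewrite mink_sl. destruct A, X; unfold vadd, vscale; simpl.
  f_equal; unfold Rdiv; ring.
Qed.

Lemma ratio_s k1 k2 w1 w2 : 0 < k1 -> 0 < k2 ->
  ratio (vscale k1 w1) (vscale k2 w2) = ratio w1 w2.
Proof.
  intros H1 H2. unfold ratio. rewrite !mink_sl, !mink_sr.
  replace (k1 * (k1 * mink w1 w1) * (k2 * (k2 * mink w2 w2)))
    with ((k1*k2)*(k1*k2) * (mink w1 w1 * mink w2 w2)) by ring.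
  rewrite sqrt_mult_alt by nra. rewrite sqrt_square by nra.
  unfold Rdiv. rewrite Rinv_mult.
  replace (k1 * (k2 * mink w1 w2) * (/ (k1 * k2) * / sqrt (mink w1 w1 * mink w2 w2)))
   with ((k1*k2) * / (k1*k2) * (mink w1 w2 * / sqrt (mink w1 w1 * mink w2 w2))) by ring.
  rewrite Rinv_r by nra. ring.
Qed.

Lemma dihedral_scale kA kB kC kD A B C D :
  kA * kA * mink A A = -1 -> 0 < kB -> 0 < kC -> 0 < kD ->
  mink (tproj' A B) (tproj' A B) <> 0 ->
  dihedral (vscale kA A) (vscale kB B) (vscale kC C) (vscale kD D) =
  acos (ratio (wv A B C) (wv A B D)).
Proof.
  intros HA HB HC HD Hu.
  assert (E : forall k X, 0 < k ->
    vadd (tproj (vscale kA A) (vscale k X))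
     (vscale (- (mink (tproj (vscale kA A) (vscale k X)) (tproj (vscale kA A) (vscale kB B)) /
        mink (tproj (vscale kA A) (vscale kB B)) (tproj (vscale kA A) (vscale kB B))))
        (tproj (vscale kA A) (vscale kB B))) = vscale k (wv A B X)).
  { intros k X Hk. rewrite !tproj_sA by auto. rewrite !tproj'_s.
    unfold wv. rewrite !mink_sl, !mink_sr.
    destruct (tproj' A X), (tproj' A B); unfold vadd, vscale; simpl.
    f_equal; field; split; try lra. }
  unfold dihedral. cbv zeta. rewrite (E kC C HC), (E kD D HD).
  fold (ratio (vscale kC (wv A B C)) (vscale kD (wv A B D))).
  rewrite ratio_s by auto. reflexivity.
Qed.

Lemma klein_hom x y z : klein x y z = vscale (/ sqrt (1 - (x*x+y*y+z*z))) (hom x y z).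
Proof. unfold klein, hom, vscale; cbv zeta; simpl. f_equal; unfold Rdiv; ring. Qed.

Lemma kpos x y z : in_ball x y z -> 0 < / sqrt (1 - (x*x+y*y+z*z)).
Proof. unfold in_ball; intro; apply Rinv_0_lt_compat, sqrt_lt_R0; lra. Qed.

Lemma knorm x y z : in_ball x y z ->
  / sqrt (1 - (x*x+y*y+z*z)) * / sqrt (1 - (x*x+y*y+z*z)) * mink (hom x y z) (hom x y z) = -1.
Proof.
  unfold in_ball; intro H. rewrite <- Rinv_mult, sqrt_sqrt by lra.
  unfold mink, hom; simpl. field. lra.
Qed.

Lemma klein_mink x y z x' y' z' : in_ball x y z -> in_ball x' y' z' ->
  x*x+y*y+z*z = x'*x'+y'*y'+z'*z' ->
  - mink (klein x y z) (klein x' y' z') = (1 - (x*x'+y*y'+z*z')) / (1 - (x*x+y*y+z*z)).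
Proof.
  unfold in_ball; intros H1 H2 E. rewrite !klein_hom, mink_sl, mink_sr, <- E.
  replace (- (/ sqrt (1 - (x * x + y * y + z * z)) *
    (/ sqrt (1 - (x * x + y * y + z * z)) * mink (hom x y z) (hom x' y' z'))))
  with (/ (sqrt (1 - (x * x + y * y + z * z)) * sqrt (1 - (x * x + y * y + z * z))) *
        - mink (hom x y z) (hom x' y' z')) by (rewrite Rinv_mult; ring).
  rewrite sqrt_sqrt by lra. unfold mink, hom; simpl. field. lra.
Qed.

Lemma arcosh_inv t L : 0 < L -> arcosh t = L -> t = (exp L * exp L + 1) / (2 * exp L).
Proof.
  intros HL H. unfold arcosh in H.
  set (g := t + sqrt (t*t-1)) in *.
  assert (Hg : 0 < g).
  { destruct (Rlt_dec 0 g) as [|n]; auto. unfold ln in H. destruct (Rlt_dec 0 g); [contradiction|lra]. }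
  assert (Eg : g = exp L) by (rewrite <- H, exp_ln; auto).
  assert (e1 : 1 < exp L) by (rewrite <- exp_0; apply exp_increasing; auto).
  destruct (Rle_dec 0 (t*t-1)) as [Hp|Hn].
  - assert (Hs : sqrt (t*t-1) = g - t) by (unfold g; ring).
    assert (Hsq := sqrt_sqrt _ Hp). rewrite Hs in Hsq. rewrite <- Eg. field_simplify_eq; [nra|lra].
  - exfalso. unfold g in Eg. rewrite sqrt_neg_0 in Eg by lra. nra.
Qed.

Lemma wv_val A B X U V W kBA kAA kXA kVU kUU :
 mink B A = kBA -> mink A A = kAA -> mink X A = kXA ->
 vadd B (vscale (-(kBA/kAA)) A) = U -> vadd X (vscale (-(kXA/kAA)) A) = V ->
 mink V U = kVU -> mink U U = kUU -> vadd V (vscale (-(kVU/kUU)) U) = W -> wv A B X = W.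
Proof.
  intros h1 h2 h3 h4 h5 h6 h7 h8. unfold wv, tproj'. rewrite h1, h2, h3, h4, h5, h6, h7; auto.
Qed.

Lemma tp_val A B U kBA kAA :
 mink B A = kBA -> mink A A = kAA -> vadd B (vscale (-(kBA/kAA)) A) = U -> tproj' A B = U.
Proof. intros h1 h2 h3. unfold tproj'. rewrite h1, h2; auto. Qed.

Ltac mk := unfold mink, hom; simpl; nra.
Ltac vec := unfold vadd, vscale, hom; simpl; f_equal; field.

Lemma alpha_val a : 0 < a -> a*a = 1/7 -> TO_alpha a (2*a) = acos (1/6).
Proof.
  intros Hp Ha. unfold TO_alpha. rewrite !klein_hom.
  assert (HU : tproj' (hom 0 a (2*a)) (hom 0 (2*a) a) = V4 (-1/2) 0 (a/2) (-2*a)).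
  { apply (tp_val _ _ _ (-3/7) (-2/7)); [mk|mk|vec]. }
  rewrite dihedral_scale; [ | apply knorm; unfold in_ball; nra
     | apply kpos; unfold in_ball; nra | apply kpos; unfold in_ball; nra | apply kpos; unfold in_ball; nra
     | rewrite HU; mk ].
  rewrite (wv_val _ _ _ (V4 (-1/2) 0 (a/2) (-2*a)) (V4 (-1/2) a (-3/2*a) (-a)) (V4 (-3/5) a (-7/5*a) (-7/5*a))
     (-3/7) (-2/7) (-3/7) (-1/14) (5/14)); [|mk|mk|mk|vec|vec|mk|mk|vec].
  rewrite (wv_val _ _ _ (V4 (-1/2) 0 (a/2) (-2*a)) (V4 (-1/2) (-a) (-3/2*a) (-a)) (V4 (-3/5) (-a) (-7/5*a) (-7/5*a))
     (-3/7) (-2/7) (-3/7) (-1/14) (5/14)); [|mk|mk|mk|vec|vec|mk|mk|vec].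
  unfold ratio.
  replace (mink (V4 (-3/5) a (-7/5*a) (-7/5*a)) (V4 (-3/5) (-a) (-7/5*a) (-7/5*a))) with (2/35) by mk.
  replace (mink (V4 (-3/5) a (-7/5*a) (-7/5*a)) (V4 (-3/5) a (-7/5*a) (-7/5*a))) with (12/35) by mk.
  replace (mink (V4 (-3/5) (-a) (-7/5*a) (-7/5*a)) (V4 (-3/5) (-a) (-7/5*a) (-7/5*a))) with (12/35) by mk.
  rewrite sqrt_square by lra. f_equal. field.
Qed.

Lemma beta_val a : 0 < a -> a*a = 1/7 -> TO_beta a (2*a) = acos (-(1/6)).
Proof.
  intros Hp Ha. unfold TO_beta. rewrite !klein_hom.
  assert (HU : tproj' (hom 0 a (2*a)) (hom a 0 (2*a)) = V4 (-1/2) a (-3/2*a) (-a)).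
  { apply (tp_val _ _ _ (-3/7) (-2/7)); [mk|mk|vec]. }
  rewrite dihedral_scale; [ | apply knorm; unfold in_ball; nra
     | apply kpos; unfold in_ball; nra | apply kpos; unfold in_ball; nra | apply kpos; unfold in_ball; nra
     | rewrite HU; mk ].
  rewrite (wv_val _ _ _ (V4 (-1/2) a (-3/2*a) (-a)) (V4 (-1) 0 (-3*a) (-2*a)) (V4 (-2/5) (-6/5*a) (-6/5*a) (-4/5*a))
     (-3/7) (-2/7) (-4/7) (3/7) (5/14)); [|mk|mk|mk|vec|vec|mk|mk|vec].
  rewrite (wv_val _ _ _ (V4 (-1/2) a (-3/2*a) (-a)) (V4 (-1/2) 0 (1/2*a) (-2*a)) (V4 (-3/5) (1/5*a) (1/5*a) (-11/5*a))
     (-3/7) (-2/7) (-3/7) (-1/14) (5/14)); [|mk|mk|mk|vec|vec|mk|mk|vec].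
  unfold ratio.
  replace (mink (V4 (-2/5) (-6/5*a) (-6/5*a) (-4/5*a)) (V4 (-3/5) (1/5*a) (1/5*a) (-11/5*a))) with (-(2/35)) by mk.
  replace (mink (V4 (-2/5) (-6/5*a) (-6/5*a) (-4/5*a)) (V4 (-2/5) (-6/5*a) (-6/5*a) (-4/5*a))) with (12/35) by mk.
  replace (mink (V4 (-3/5) (1/5*a) (1/5*a) (-11/5*a)) (V4 (-3/5) (1/5*a) (1/5*a) (-11/5*a))) with (12/35) by mk.
  rewrite sqrt_square by lra. f_equal. field.
Qed.

Lemma gamma_val c : 0 < c -> c*c = 1/7 ->
  cube_pyr_gamma c = acos ((2/5) / sqrt (24/35 * (2/5))).
Proof.
  intros Hp Ha. unfold cube_pyr_gamma. rewrite !klein_hom.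
  assert (HU : tproj' (hom c c c) (hom c (-c) c) = V4 (-1/2) (-1/2*c) (-5/2*c) (-1/2*c)).
  { apply (tp_val _ _ _ (-6/7) (-4/7)); [mk|mk|vec]. }
  rewrite dihedral_scale; [ | apply knorm; unfold in_ball; nra
     | apply kpos; unfold in_ball; nra | apply kpos; unfold in_ball; nra | apply kpos; unfold in_ball; nra
     | rewrite HU; mk ].
  rewrite (wv_val _ _ _ (V4 (-1/2) (-1/2*c) (-5/2*c) (-1/2*c)) (V4 (-1/2) (-5/2*c) (-1/2*c) (-1/2*c)) (V4 (-2/5) (-12/5*c) 0 (-2/5*c))
     (-6/7) (-4/7) (-6/7) (1/7) (5/7)); [|mk|mk|mk|vec|vec|mk|mk|vec].
  rewrite (wv_val _ _ _ (V4 (-1/2) (-1/2*c) (-5/2*c) (-1/2*c)) (V4 (-3/4) (-7/4*c) (-7/4*c) (-7/4*c)) (V4 (-2/5) (-7/5*c) 0 (-7/5*c))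
     (-6/7) (-4/7) (-1) (1/2) (5/7)); [|mk|mk|mk|vec|vec|mk|mk|vec].
  unfold ratio.
  replace (mink (V4 (-2/5) (-12/5*c) 0 (-2/5*c)) (V4 (-2/5) (-7/5*c) 0 (-7/5*c))) with (2/5) by mk.
  replace (mink (V4 (-2/5) (-12/5*c) 0 (-2/5*c)) (V4 (-2/5) (-12/5*c) 0 (-2/5*c))) with (24/35) by mk.
  replace (mink (V4 (-2/5) (-7/5*c) 0 (-7/5*c)) (V4 (-2/5) (-7/5*c) 0 (-7/5*c))) with (2/5) by mk.
  reflexivity.
Qed.

Lemma gamma2 : 2 * acos ((2/5) / sqrt (24/35 * (2/5))) = acos (1/6).
Proof.
  set (x := (2/5) / sqrt (24/35 * (2/5))).
  assert (Hs : sqrt (24/35 * (2/5)) * sqrt (24/35 * (2/5)) = 24/35 * (2/5)) by (apply sqrt_sqrt; lra).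
  assert (Hsp : 0 < sqrt (24/35 * (2/5))) by (apply sqrt_lt_R0; lra).
  assert (Hx2 : x * x = 7/12) by (unfold x; replace (2 / 5 / sqrt (24 / 35 * (2 / 5)) * (2 / 5 / sqrt (24 / 35 * (2 / 5)))) with ((2/5)*(2/5)/(sqrt (24 / 35 * (2 / 5)) * sqrt (24 / 35 * (2 / 5)))) by (field; lra); rewrite Hs; field).
  assert (Hx0 : 0 < x) by (unfold x; apply Rdiv_lt_0_compat; lra).
  assert (Hx1 : x <= 1) by nra.
  pose proof (acos_bound x) as [B1 B2].
  assert (Hc : cos (acos x) = x) by (apply cos_acos; lra).
  assert (B3 : acos x <= PI/2).
  { destruct (Rle_dec (acos x) (PI/2)) as [|n]; auto. exfalso.
    assert (cos (acos x) < 0) by (apply cos_lt_0; pose proof PI_RGT_0; lra). lra. }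
  rewrite <- (acos_cos (2 * acos x)) by lra. f_equal. rewrite cos_2a_cos, Hc. nra.
Qed.

Lemma frac32 n d : 0 < d -> n = 3/2 * d -> n / d = 3/2.
Proof. intros H ->. field. lra. Qed.

Lemma frac_inv n d : 0 < d -> n / d = 3/2 -> n = 3/2 * d.
Proof. intros Hd H. rewrite <- H. field. lra. Qed.

Theorem theorem7p1 :
  exists l : R, 0 < l /\
    (exists a b c : R, trunc_oct_regular a b l /\ cube_regular c l) /\
    (forall a b c : R, trunc_oct_regular a b l -> cube_regular c l ->
       TO_alpha a b + 2 * TO_beta a b + 2 * cube_pyr_gamma c = 2 * PI).
Proof.
  assert (Hl : 0 < arcosh (3/2)).
  { unfold arcosh. rewrite <- ln_1. apply ln_increasing; [lra|].
    pose proof (sqrt_pos (3/2*(3/2)-1)). lra. }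
  exists (arcosh (3/2)). split; [exact Hl|]. split.
  - set (a := / sqrt 7).
    assert (Ha : a * a = 1/7).
    { unfold a. rewrite <- Rinv_mult, sqrt_sqrt by lra. field. }
    assert (Hp : 0 < a) by (unfold a; apply Rinv_0_lt_compat, sqrt_lt_R0; lra).
    exists a, (2*a), a. split.
    + unfold trunc_oct_regular. repeat split; try lra; [unfold in_ball; nra| |];
      unfold hdist; f_equal; rewrite klein_mink by (unfold in_ball; nra); apply frac32; nra.
    + unfold cube_regular. repeat split; try lra; [unfold in_ball; nra|].
      unfold hdist; f_equal; rewrite klein_mink by (unfold in_ball; nra); apply frac32; nra.
  - intros a b c [Ha0 [Hab [Hib [H1 H2]]]] [Hc0 [Hic H3]].
    pose proof (arcosh_inv _ _ Hl eq_refl) as T.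
    unfold hdist in H1, H2, H3.
    apply arcosh_inv in H1; [|exact Hl]. apply arcosh_inv in H2; [|exact Hl].
    apply arcosh_inv in H3; [|exact Hl].
    rewrite <- T in H1, H2, H3.
    unfold in_ball in Hib, Hic.
    rewrite klein_mink in H1 by (unfold in_ball; nra).
    rewrite klein_mink in H2 by (unfold in_ball; nra).
    rewrite klein_mink in H3 by (unfold in_ball; nra).
    apply frac_inv in H1; [|nra]. apply frac_inv in H2; [|nra]. apply frac_inv in H3; [|nra].
    assert (Hb : b = 2 * a) by nra.
    subst b.
    assert (Ha : a * a = 1/7) by nra.
    assert (Hc : c * c = 1/7) by nra.
    rewrite (alpha_val a Ha0 Ha), (beta_val a Ha0 Ha), (gamma_val c Hc0 Hc).
    rewrite acos_opp, <- gamma2. ring.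
Qed.
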